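(* Let $c>0$ and $F_c(t)=\log\big(1+2c\sinh\frac{t}{2}\big)$ for $t>0$. The function $t\mapsto F_c(t)/t$ is decreasing from $(0,\infty)$ onto $(1/2,c)$ if and only if $c\ge 1$. *)

(* Defs.v *)
From Stdlib Require Import Reals.
Open Scope R_scope.

Definition F (c t : R) : R := ln (1 + 2 * c * sinh (t / 2)).

Definition G (c t : R) : R := F c t / t.

(* Main.v *)
Require Import Defs.
From Stdlib Require Import Reals Lra Psatz.
From Coquelicot Require Import Coquelicot.
Open Scope R_scope.

Definition Q (c x : R) := c * exp x * exp x + exp x - c.
Definition Pd (c x : R) := (2 * c * exp x * exp x + exp x) / Q c x.
Definition K (c x : R) := ln (Q c x) - x * Pd c x.

Lemma exp_ge1 x : 0 <= x -> 1 <= exp x.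
Proof. intros; pose proof (exp_ineq1_le x); lra. Qed.

Lemma Qpos c x : 0 < c -> 0 <= x -> 0 < Q c x.
Proof. intros; unfold Q; pose proof (exp_ge1 x H0); assert (0 <= c * (exp x * exp x - 1)) by (apply Rmult_le_pos; nra); nra. Qed.

Lemma K_deriv c x : 0 < c -> 0 <= x ->
  derivable_pt_lim (K c) x
   (x * c * exp x * (1 + 4 * c * exp x - exp x * exp x) / (Q c x * Q c x)).
Proof.
  intros hc hx. apply is_derive_Reals.
  pose proof (Qpos c x hc hx) as hq.
  unfold K, Pd, Q in *.
  auto_derive.
  - repeat split; lra.
  - field. lra.
Qed.

Lemma Q_gt_sq c x : 1 <= c -> 0 < x -> exp x * exp x < Q c x.
Proof.
  intros hc hx. unfold Q. assert (1 < exp x) by (pose proof (exp_ineq1 x ltac:(lra)); lra).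
  assert (0 <= (c - 1) * (exp x * exp x - 1)) by (apply Rmult_le_pos; nra). nra.
Qed.

Lemma K0 c : 0 < c -> K c 0 = 0.
Proof. intros. unfold K, Pd, Q. rewrite exp_0. replace (c*1*1+1-c) with 1 by ring. rewrite ln_1. ring. Qed.

Lemma K_pos c x : 1 <= c -> 0 < x -> 0 < K c x.
Proof.
  intros hc hx.
  assert (hq : 0 < Q c x) by (apply Qpos; lra).
  assert (h1 : 1 < exp x) by (pose proof (exp_ineq1 x ltac:(lra)); lra).
  destruct (Rle_or_lt (2 * c) (exp x)) as [hv|hv].
  - assert (hl : 2 * x < ln (Q c x)).
    { replace (2 * x) with (ln (exp x * exp x)).
      apply ln_increasing. nra. apply Q_gt_sq; lra.
      rewrite ln_mult by apply exp_pos. rewrite ln_exp. ring. }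
    assert (e : K c x = (ln (Q c x) - 2 * x) + x * (exp x - 2 * c) / Q c x).
    { unfold K, Pd. field_simplify; [|lra|lra]. unfold Q. field. unfold Q in hq; lra. }
    rewrite e. assert (0 <= x * (exp x - 2 * c) / Q c x).
    { apply Rmult_le_pos; [apply Rmult_le_pos; lra| left; apply Rinv_0_lt_compat; lra]. }
    lra.
  - destruct (MVT_cor2 (K c) (fun y => y * c * exp y * (1 + 4 * c * exp y - exp y * exp y) / (Q c y * Q c y)) 0 x hx)
      as [xi [e [h0 h2]]].
    { intros y hy. apply K_deriv; lra. }
    rewrite K0 in e by lra.
    assert (hw1 : 1 < exp xi) by (pose proof (exp_ineq1 xi ltac:(lra)); lra).
    assert (hw2 : exp xi < exp x) by (apply exp_increasing; lra).
    assert (hqx : 0 < Q c xi) by (apply Qpos; lra).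
    assert (0 < xi * c * exp xi * (1 + 4 * c * exp xi - exp xi * exp xi) / (Q c xi * Q c xi)).
    { apply Rmult_lt_0_compat.
      - assert (0 < xi * c * exp xi) by (repeat apply Rmult_lt_0_compat; lra).
        apply Rmult_lt_0_compat; [lra|]. nra.
      - apply Rinv_0_lt_compat; nra. }
    nra.
Qed.

Lemma g_deriv c x : 0 < c -> 0 < x ->
  derivable_pt_lim (fun y => ln (Q c y) / y) x (- K c x / (x * x)).
Proof.
  intros hc hx. apply is_derive_Reals.
  pose proof (Qpos c x hc (Rlt_le _ _ hx)) as hq.
  unfold K, Pd, Q in *.
  auto_derive.
  - repeat split; lra.
  - change (c * exp x * exp x + exp x + - c) with (c * exp x * exp x + exp x - c). field. lra.
Qed.

Lemma g_decr c a b : 1 <= c -> 0 < a -> a < b -> ln (Q c b) / b < ln (Q c a) / a.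
Proof.
  intros hc ha hab.
  destruct (MVT_cor2 (fun y => ln (Q c y) / y) (fun y => - K c y / (y * y)) a b hab)
    as [xi [e [h0 h2]]].
  { intros y hy. apply g_deriv; lra. }
  pose proof (K_pos c xi hc ltac:(lra)).
  assert (0 < K c xi / (xi * xi)) by (apply Rdiv_lt_0_compat; nra).
  assert (- K c xi / (xi * xi) * (b - a) < 0).
  { unfold Rdiv in *. rewrite Ropp_mult_distr_l_reverse. nra. }
  lra.
Qed.

Lemma lt_div a b t : 0 < t -> a * t < b -> a < b / t.
Proof. intros; apply Rmult_lt_reg_r with t; [lra|]; replace (b/t*t) with b by (field; lra); lra. Qed.
Lemma div_lt a b t : 0 < t -> b < a * t -> b / t < a.
Proof. intros; apply Rmult_lt_reg_r with t; [lra|]; replace (b/t*t) with b by (field; lra); lra. Qed.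

Lemma G_eq c t : 0 < c -> 0 < t -> G c t = (ln (Q c (t/2)) - t/2) / t.
Proof.
  intros hc ht. unfold G, F, sinh.
  assert (hq : 0 < Q c (t/2)) by (apply Qpos; lra).
  pose proof (exp_pos (t/2)) as he.
  replace (1 + 2 * c * ((exp (t / 2) - exp (- (t / 2))) / 2)) with (Q c (t/2) / exp (t/2)).
  - rewrite ln_div by lra. rewrite ln_exp. reflexivity.
  - rewrite exp_Ropp. unfold Q. field. lra.
Qed.

Lemma G_decr c s t : 1 <= c -> 0 < s -> s < t -> G c t < G c s.
Proof.
  intros hc hs hst. rewrite !G_eq by lra.
  pose proof (g_decr c (s/2) (t/2) hc ltac:(lra) ltac:(lra)).
  replace ((ln (Q c (t / 2)) - t / 2) / t) with ((ln (Q c (t / 2)) / (t/2)) / 2 - 1/2) by (field; lra).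
  replace ((ln (Q c (s / 2)) - s / 2) / s) with ((ln (Q c (s / 2)) / (s/2)) / 2 - 1/2) by (field; lra).
  lra.
Qed.

Lemma G_gt_half c t : 1 <= c -> 0 < t -> 1/2 < G c t.
Proof.
  intros hc ht. rewrite G_eq by lra.
  assert (t < ln (Q c (t/2))).
  { assert (e : ln (exp (t/2) * exp (t/2)) = t).
    { rewrite ln_mult by apply exp_pos. rewrite ln_exp. field. }
    rewrite <- e at 1.
    apply ln_increasing. pose proof (exp_pos (t/2)); nra. apply Q_gt_sq; lra. }
  apply lt_div; lra.
Qed.

Lemma G_lt_c c t : 1 <= c -> 0 < t -> G c t < c.
Proof.
  intros hc ht. rewrite G_eq by lra.
  assert (hx0 : 0 < t/2) by lra.
  remember (t/2) as x eqn:Hx.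
  assert (hv : 1 < exp x) by (pose proof (exp_ineq1 x ltac:(lra)); lra).
  set (v := exp x) in *.
  assert (hx1 : 1 - 1 / v <= x).
  { pose proof (exp_ineq1_le (- x)). rewrite exp_Ropp in H. fold v in H.
    unfold Rdiv. lra. }
  assert (he : exp ((2*c+1)*x) = v * v * v * exp (2*(c-1)*x)).
  { unfold v. rewrite <- !exp_plus. f_equal. ring. }
  pose proof (exp_ineq1_le (2*(c-1)*x)).
  assert (hq : Q c x < exp ((2*c+1)*x)).
  { rewrite he. unfold Q. fold v.
    assert (h2 : 1 + 2 * (c-1) * (1 - 1/v) <= exp (2 * (c - 1) * x)).
    { assert (0 <= 2 * (c-1)) by lra. nra. }
    assert (h3 : v*v*v*(1 + 2 * (c-1) * (1 - 1/v)) = v*v*v + 2*(c-1)*v*v*(v-1)) by (field; lra).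
    assert (v*v*v*(1 + 2 * (c-1) * (1 - 1/v)) <= v*v*v*exp (2 * (c - 1) * x)).
    { apply Rmult_le_compat_l; [nra|lra]. }
    assert (0 < (v-1)*(v-1)*(v+1)) by (apply Rmult_lt_0_compat; nra).
    assert (0 <= (c-1)*((v-1)*(v-1)*(2*v+1))) by (apply Rmult_le_pos; nra).
    nra. }
  assert (hl : ln (Q c x) < (2*c+1)*x).
  { rewrite <- (ln_exp ((2*c+1)*x)). apply ln_increasing; [apply Qpos; lra| exact hq]. }
  apply div_lt; [lra|]. rewrite Hx in hl |- *. nra.
Qed.

Lemma ln_lower w : 0 < w -> 1 - 1 / w <= ln w.
Proof.
  intros hw. pose proof (exp_ineq1_le (ln (1/w))). rewrite exp_ln in H by (apply Rdiv_lt_0_compat; lra).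
  rewrite ln_div in H by lra. rewrite ln_1 in H. lra.
Qed.

Lemma G_t1 c y : 1 <= c -> 1/2 < y -> y < c -> exists t, 0 < t /\ y < G c t.
Proof.
  intros hc hy1 hy2.
  set (d := Rmin 1 ((c/y - 1)/(3*c+1)) / 2).
  assert (hcy : 0 < (c/y - 1)/(3*c+1)).
  { apply Rdiv_lt_0_compat; [|lra]. apply Rlt_0_minus. apply (Rmult_lt_reg_r y); [lra|].
    replace (c/y*y) with c by (field; lra). lra. }
  assert (hd0 : 0 < d) by (unfold d; assert (0 < Rmin 1 ((c/y - 1)/(3*c+1))) by (apply Rmin_glb_lt; lra); lra).
  assert (hd1 : d <= 1/2) by (unfold d; pose proof (Rmin_l 1 ((c/y - 1)/(3*c+1))); lra).
  assert (hd2 : d * (3*c+1) < c/y - 1).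
  { unfold d. pose proof (Rmin_r 1 ((c/y - 1)/(3*c+1))).
    assert (Rmin 1 ((c / y - 1) / (3 * c + 1)) * (3*c+1) <= c/y - 1).
    { replace (c/y - 1) with ((c / y - 1) / (3 * c + 1) * (3*c+1)) at 2 by (field; lra).
      apply Rmult_le_compat_r; lra. }
    assert (0 < Rmin 1 ((c / y - 1) / (3 * c + 1)) * (3*c+1)) by (apply Rmult_lt_0_compat; [apply Rmin_glb_lt|]; lra).
    lra. }
  set (x := ln (1 + d)).
  assert (hx : 0 < x) by (unfold x; rewrite <- ln_1; apply ln_increasing; lra).
  assert (hv : exp x = 1 + d) by (unfold x; apply exp_ln; lra).
  exists (2 * x). split; [lra|].
  rewrite G_eq by lra. replace (2 * x / 2) with x by field.
  assert (hq : 0 < Q c x) by (apply Qpos; lra).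
  assert (hQ : Q c x <= 1 + d * (3*c+1)) by (unfold Q; rewrite hv; assert (0 <= c * (d * (1 - d))) by (apply Rmult_le_pos; [lra|apply Rmult_le_pos; lra]); nra).
  assert (hlow : 1 - exp x / Q c x <= ln (Q c x) - x).
  { pose proof (ln_lower (Q c x / exp x) ltac:(apply Rdiv_lt_0_compat; [lra|apply exp_pos])).
    rewrite ln_div in H by (try lra; apply exp_pos). rewrite ln_exp in H.
    replace (1 / (Q c x / exp x)) with (exp x / Q c x) in H by (field; split; [pose proof (exp_pos x)|]; lra). lra. }
  assert (e1 : 1 - exp x / Q c x = c * (exp x * exp x - 1) / Q c x) by (unfold Q in *; field; lra).
  assert (e2 : 2 * x <= exp x * exp x - 1).
  { rewrite <- exp_plus. pose proof (exp_ineq1_le (x + x)). lra. }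
  assert (h3 : c * (2 * x) / Q c x <= ln (Q c x) - x).
  { rewrite e1 in hlow. eapply Rle_trans; [|exact hlow]. unfold Rdiv.
    apply Rmult_le_compat_r; [left; apply Rinv_0_lt_compat; lra|]. nra. }
  apply lt_div; [lra|].
  assert (y * Q c x < c).
  { assert (y * Q c x <= y * (1 + d * (3 * c + 1))) by (apply Rmult_le_compat_l; lra).
    assert (y * (1 + d * (3 * c + 1)) < y * (c / y)) by (apply Rmult_lt_compat_l; lra).
    replace (y * (c/y)) with c in H0 by (field; lra). lra. }
  assert (y * (2 * x) < c * (2 * x) / Q c x).
  { apply lt_div; [lra|]. nra. }
  lra.
Qed.

Lemma G_t2 c y : 1 <= c -> 1/2 < y -> y < c -> exists t, 0 < t /\ G c t < y.
Proof.
  intros hc hy1 hy2.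
  assert (hl : 0 < ln (1 + c)) by (rewrite <- ln_1; apply ln_increasing; lra).
  set (x := ln (1 + c) / (2 * y - 1) + 1).
  assert (hx : 0 < x) by (unfold x; assert (0 < ln (1 + c) / (2 * y - 1)) by (apply Rdiv_lt_0_compat; lra); lra).
  assert (hx2 : ln (1 + c) < (2 * y - 1) * x).
  { unfold x. rewrite Rmult_plus_distr_l. replace ((2 * y - 1) * (ln (1 + c) / (2 * y - 1))) with (ln (1+c)) by (field; lra). lra. }
  exists (2 * x). split; [lra|].
  rewrite G_eq by lra. replace (2 * x / 2) with x by field.
  assert (hq : 0 < Q c x) by (apply Qpos; lra).
  assert (h1 : ln (Q c x) <= ln (1 + c) + 2 * x).
  { assert (Q c x <= (1 + c) * (exp x * exp x)).
    { unfold Q. pose proof (exp_ge1 x ltac:(lra)). nra. }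
    replace (ln (1 + c) + 2 * x) with (ln ((1 + c) * (exp x * exp x))).
    - destruct (Req_dec (Q c x) ((1 + c) * (exp x * exp x))) as [e|n].
      + rewrite e; lra.
      + left; apply ln_increasing; lra.
    - rewrite !ln_mult by (try lra; try apply exp_pos; pose proof (exp_pos x); nra). rewrite ln_exp. ring. }
  apply div_lt; lra.
Qed.

Definition psi (c y u : R) := ln (Q c (u / 2)) - u / 2 - y * u.

Lemma psi_cont c y t : 0 < c -> continuity_pt (fun s => psi c y (Rabs s)) t.
Proof.
  intros hc.
  apply (continuity_pt_comp Rabs (psi c y)); [apply Rcontinuity_abs|].
  apply continuity_pt_filterlim. apply (@ex_derive_continuous R_AbsRing R_NormedModule (psi c y) (Rabs t)).
  pose proof (Qpos c (Rabs t / 2) hc ltac:(pose proof (Rabs_pos t); lra)) as hq.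
  unfold psi, Q in *. auto_derive. lra.
Qed.

Lemma G_surj c y : 1 <= c -> 1/2 < y -> y < c -> exists t, 0 < t /\ G c t = y.
Proof.
  intros hc hy1 hy2.
  destruct (G_t1 c y hc hy1 hy2) as [t1 [ht1 g1]].
  destruct (G_t2 c y hc hy1 hy2) as [t2 [ht2 g2]].
  assert (p1 : 0 < psi c y (Rabs t1)).
  { rewrite Rabs_pos_eq by lra. rewrite G_eq in g1 by lra. unfold psi.
    apply (Rmult_lt_compat_r t1) in g1; [|lra]. replace ((ln (Q c (t1 / 2)) - t1 / 2) / t1 * t1) with (ln (Q c (t1 / 2)) - t1 / 2) in g1 by (field; lra). lra. }
  assert (p2 : psi c y (Rabs t2) < 0).
  { rewrite Rabs_pos_eq by lra. rewrite G_eq in g2 by lra. unfold psi.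
    apply (Rmult_lt_compat_r t2) in g2; [|lra]. replace ((ln (Q c (t2 / 2)) - t2 / 2) / t2 * t2) with (ln (Q c (t2 / 2)) - t2 / 2) in g2 by (field; lra). lra. }
  destruct (IVT_gen (fun s => psi c y (Rabs s)) t1 t2 0) as [z [hz ez]].
  { intro s. apply psi_cont. lra. }
  { split; [apply Rle_trans with (psi c y (Rabs t2)); [apply Rmin_r|lra]
           |apply Rle_trans with (psi c y (Rabs t1)); [lra|apply Rmax_l]]. }
  assert (hz0 : 0 < z).
  { assert (0 < Rmin t1 t2) by (apply Rmin_glb_lt; lra). lra. }
  exists z. split; [lra|].
  rewrite Rabs_pos_eq in ez by lra. unfold psi in ez.
  rewrite G_eq by lra.
  replace (ln (Q c (z / 2)) - z / 2) with (y * z) by lra. field. lra.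
Qed.

Lemma G_not c : 0 < c -> c < 1 -> exists t, 0 < t /\ G c t <= 1/2.
Proof.
  intros hc hc1.
  set (v := 2 / (1 - c)).
  assert (hv : 2 < v).
  { unfold v. apply lt_div; lra. }
  set (x := ln v).
  assert (hx : 0 < x) by (unfold x; rewrite <- ln_1; apply ln_increasing; lra).
  assert (ev : exp x = v) by (unfold x; apply exp_ln; lra).
  exists (2 * x). split; [lra|].
  rewrite G_eq by lra. replace (2 * x / 2) with x by field.
  assert (hq : Q c x <= exp x * exp x).
  { unfold Q. rewrite ev. assert ((1 - c) * v = 2) by (unfold v; field; lra). nra. }
  assert (ln (Q c x) <= 2 * x).
  { replace (2 * x) with (ln (exp x * exp x)) by (rewrite ln_mult by apply exp_pos; rewrite ln_exp; ring).
    destruct (Req_dec (Q c x) (exp x * exp x)) as [e|n]; [rewrite e; lra|].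
    left; apply ln_increasing; [apply Qpos; lra|lra]. }
  apply Rmult_le_reg_r with (2 * x); [lra|].
  replace ((ln (Q c x) - x) / (2 * x) * (2 * x)) with (ln (Q c x) - x) by (field; lra). lra.
Qed.

Theorem lemma3p4 (c : R) (hc : 0 < c) :
  ((forall s t, 0 < s -> s < t -> G c t < G c s) /\
   (forall y, (1 / 2 < y /\ y < c) <-> (exists t, 0 < t /\ G c t = y)))
  <-> 1 <= c.
Proof.
  split.
  - intros [_ hr]. destruct (Rlt_le_dec c 1) as [h|h]; [|exact h].
    destruct (G_not c hc h) as [t [ht hg]].
    destruct (proj2 (hr (G c t)) (ex_intro _ t (conj ht eq_refl))). lra.
  - intros h1. split.
    + intros s t hs hst. apply G_decr; assumption.
    + intros y. split.
      * intros [a b]. apply G_surj; assumption.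
      * intros [t [ht e]]. subst y. split; [apply G_gt_half|apply G_lt_c]; assumption.
Qed.
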